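(* For every Tychonoff space $X$, the following are equivalent: (1) $C_p(X)\models S_{fin}(\Gamma_f,\Omega_f)$ for every $f\in C_p(X)$; (2) $X\models S_{fin}(\Gamma_F,\Omega)$.
   Context: All spaces are Tychonoff; $C_p(X)$ is $C(X)$ with pointwise convergence topology. For $y$ in a space $Y$: $\Omega_y=\{A\subseteq Y: y\in\overline A\setminus A\}$, $\Gamma_y=\{A\subseteq Y: A$ infinite, $y\notin A$, every neighbourhood of $y$ contains all but finitely many points of $A\}$. Zero-set: $g^{-1}(0)$, $g\in C(X)$; cozero-set: its complement. A cover $\mathcal U$ of $X$ always means $X=\bigcup\mathcal U$, $X\notin\mathcal U$; $\omega$-cover: every finite subset lies in a member; $\gamma$-cover: infinite, each point in all but finitely many members. $\Omega$: open $\omega$-covers. $\Gamma_F$: $\gamma$-covers $\mathcal U$ of $X$ by cozero-sets for which there are zero-sets $F(U)\subseteq U$ ($U\in\mathcal U$) with $\{F(U):U\in\mathcal U\}$ a $\gamma$-cover of $X$. $S_{fin}(\mathcal A,\mathcal B)$: for every sequence $(A_n)$ from $\mathcal A$ there are finite $B_n\subseteq A_n$ with $\bigcup_nB_n\in\mathcal B$. *)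

(* Defs.v *)
From Stdlib Require Import Reals Lra List Classical.
Open Scope R_scope.

Record TopSpace := {
  carrier :> Type;
  is_open : (carrier -> Prop) -> Prop;
  open_full : is_open (fun _ => True);
  open_inter : forall U V, is_open U -> is_open V -> is_open (fun x => U x /\ V x);
  open_union : forall (F : (carrier -> Prop) -> Prop),
      (forall U, F U -> is_open U) -> is_open (fun x => exists U, F U /\ U x)
}.

Arguments is_open {t} _.

Definition finite_set {T : Type} (A : T -> Prop) : Prop :=
  exists l : list T, forall a, A a -> In a l.
Definition infinite_set {T : Type} (A : T -> Prop) : Prop := ~ finite_set A.

Definition continuous (X : TopSpace) (f : X -> R) : Prop :=
  forall (x : X) (eps : R), 0 < eps ->
    exists U : X -> Prop, is_open U /\ U x /\ forall y, U y -> Rabs (f y - f x) < eps.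

Definition closed_set (X : TopSpace) (C : X -> Prop) : Prop :=
  is_open (fun x : X => ~ C x).

Definition T1 (X : TopSpace) : Prop :=
  forall x y : X, x <> y -> exists U : X -> Prop, is_open U /\ U x /\ ~ U y.

Definition completely_regular (X : TopSpace) : Prop :=
  forall (C : X -> Prop) (x : X), closed_set X C -> ~ C x ->
    exists f : X -> R, continuous X f /\ (forall y, 0 <= f y <= 1) /\
      f x = 0 /\ forall y, C y -> f y = 1.

Definition tychonoff (X : TopSpace) : Prop := T1 X /\ completely_regular X.

Definition zero_set (X : TopSpace) (Z : X -> Prop) : Prop :=
  exists g : X -> R, continuous X g /\ forall x, Z x <-> g x = 0.
Definition cozero_set (X : TopSpace) (U : X -> Prop) : Prop :=
  exists g : X -> R, continuous X g /\ forall x, U x <-> g x <> 0.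

(** C_p(X): continuous real functions with the topology of pointwise convergence,
    generated by the basic neighbourhoods {g : |g x_i - f x_i| < eps, i}. *)
Definition CX (X : TopSpace) : Type := { f : X -> R | continuous X f }.

Definition basic_nbhd (X : TopSpace) (f : CX X) (l : list X) (eps : R) (g : CX X) : Prop :=
  forall x, In x l -> Rabs (proj1_sig g x - proj1_sig f x) < eps.

Definition cp_open (X : TopSpace) (O : CX X -> Prop) : Prop :=
  forall f, O f -> exists (l : list X) (eps : R), 0 < eps /\
    forall g, basic_nbhd X f l eps g -> O g.

Lemma cp_open_full (X : TopSpace) : cp_open X (fun _ => True).
Proof. intros f _; exists nil, 1; split; [lra | auto]. Qed.

Lemma cp_open_inter (X : TopSpace) U V :
  cp_open X U -> cp_open X V -> cp_open X (fun x => U x /\ V x).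
Proof.
  intros HU HV f [Uf Vf].
  destruct (HU f Uf) as [l1 [e1 [He1 H1]]].
  destruct (HV f Vf) as [l2 [e2 [He2 H2]]].
  exists (l1 ++ l2), (Rmin e1 e2); split.
  - apply Rmin_glb_lt; assumption.
  - intros g Hg; split.
    + apply H1; intros x Hx.
      eapply Rlt_le_trans; [apply Hg; apply in_or_app; auto | apply Rmin_l].
    + apply H2; intros x Hx.
      eapply Rlt_le_trans; [apply Hg; apply in_or_app; auto | apply Rmin_r].
Qed.

Lemma cp_open_union (X : TopSpace) (F : (CX X -> Prop) -> Prop) :
  (forall U, F U -> cp_open X U) -> cp_open X (fun x => exists U, F U /\ U x).
Proof.
  intros HF f [U [FU Uf]].
  destruct (HF U FU f Uf) as [l [e [He H]]].
  exists l, e; split; auto.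
  intros g Hg; exists U; split; auto.
Qed.

Definition Cp (X : TopSpace) : TopSpace :=
  {| carrier := CX X; is_open := cp_open X;
     open_full := cp_open_full X; open_inter := cp_open_inter X;
     open_union := cp_open_union X |}.

Definition in_closure (Y : TopSpace) (A : Y -> Prop) (y : Y) : Prop :=
  forall U : Y -> Prop, is_open U -> U y -> exists a, U a /\ A a.

Definition Omega_pt (Y : TopSpace) (y : Y) (A : Y -> Prop) : Prop :=
  in_closure Y A y /\ ~ A y.

Definition Gamma_pt (Y : TopSpace) (y : Y) (A : Y -> Prop) : Prop :=
  infinite_set A /\ ~ A y /\
  forall U : Y -> Prop, is_open U -> U y -> finite_set (fun a => A a /\ ~ U a).

(** Covers of X (X itself is not a member). *)
Definition is_cover (X : TopSpace) (C : (X -> Prop) -> Prop) : Prop :=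
  (forall x : X, exists U, C U /\ U x) /\ ~ (exists U, C U /\ forall x : X, U x).

Definition omega_cover (X : TopSpace) (C : (X -> Prop) -> Prop) : Prop :=
  is_cover X C /\ forall l : list X, exists U, C U /\ forall x, In x l -> U x.

Definition gamma_cover (X : TopSpace) (C : (X -> Prop) -> Prop) : Prop :=
  is_cover X C /\ infinite_set C /\
  forall x : X, finite_set (fun U => C U /\ ~ U x).

Definition Omega_cov (X : TopSpace) (C : (X -> Prop) -> Prop) : Prop :=
  omega_cover X C /\ forall U, C U -> is_open U.

Definition Gamma_F (X : TopSpace) (C : (X -> Prop) -> Prop) : Prop :=
  gamma_cover X C /\ (forall U, C U -> cozero_set X U) /\
  exists F : (X -> Prop) -> (X -> Prop),
    (forall U, C U -> zero_set X (F U) /\ forall x, F U x -> U x) /\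
    gamma_cover X (fun V => exists U, C U /\ V = F U).

Definition S_fin {T : Type} (A B : (T -> Prop) -> Prop) : Prop :=
  forall S : nat -> T -> Prop, (forall n, A (S n)) ->
    exists Bs : nat -> T -> Prop,
      (forall n, finite_set (Bs n) /\ forall t, Bs n t -> S n t) /\
      B (fun t => exists n, Bs n t).

(* Main.v *)
Require Import Defs.
From Stdlib Require Import Reals List.
From Stdlib Require Import Lra Classical ClassicalEpsilon FunctionalExtensionality PropExtensionality Arith Lia.
Open Scope R_scope.

Definition choose_or {A : Type} (a0 : A) (P : A -> Prop) : A :=
  epsilon (inhabits a0) P.
Lemma choose_or_spec {A : Type} (a0 : A) (P : A -> Prop) :
  (exists a, P a) -> P (choose_or a0 P).
Proof. intro H; unfold choose_or; apply epsilon_spec; exact H. Qed.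

Lemma finite_sub {T} (P Q : T -> Prop) :
  (forall a, P a -> Q a) -> finite_set Q -> finite_set P.
Proof. intros H [l Hl]; exists l; auto. Qed.

Lemma finite_image {T U} (P : T -> Prop) (Q : U -> Prop) (m : U -> T) :
  finite_set Q -> (forall a, P a -> exists b, Q b /\ a = m b) -> finite_set P.
Proof.
  intros [l Hl] H; exists (map m l); intros a Pa.
  destruct (H a Pa) as [b [Qb ->]]. apply in_map; auto.
Qed.

Lemma finite_union_list {I T} (l : list I) (P : I -> T -> Prop) :
  (forall x, In x l -> finite_set (P x)) ->
  finite_set (fun z => exists x, In x l /\ P x z).
Proof.
  induction l as [|x l IH]; intros H.
  - exists nil; intros z [x [[] _]].
  - destruct (H x (or_introl eq_refl)) as [l1 H1].
    destruct IH as [l2 H2]. { intros y Hy; apply H; right; auto. }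
    exists (l1 ++ l2); intros z [y [[<-|Hy] Pz]]; apply in_or_app.
    + left; auto.
    + right; apply H2; eauto.
Qed.

Lemma infinite_minus_finite {T} (P Q : T -> Prop) :
  infinite_set P -> finite_set Q -> exists a, P a /\ ~ Q a.
Proof.
  intros HP HQ. apply NNPP; intro N. apply HP.
  apply (finite_sub P Q); auto.
  intros a Pa. apply NNPP; intro nQ. apply N; eauto.
Qed.

Lemma points_list {T Y} (L : list T) (P : T -> Prop) (Q : Y -> T -> Prop) :
  (forall U, In U L -> P U -> exists y, Q y U) ->
  exists ly, forall U, In U L -> P U -> exists y, In y ly /\ Q y U.
Proof.
  induction L as [|U L IH]; intros H.
  - exists nil; intros U [].
  - destruct IH as [ly Hly]. { intros V HV; apply H; right; auto. }
    destruct (classic (P U)) as [PU|nPU].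
    + destruct (H U (or_introl eq_refl) PU) as [y Hy].
      exists (y :: ly); intros V [<-|HV] PV.
      * exists y; split; [left|]; auto.
      * destruct (Hly V HV PV) as [z [Hz Qz]]; exists z; split; [right|]; auto.
    + exists ly; intros V [<-|HV] PV; [contradiction|auto].
Qed.

Lemma finite_points {T Y} (P : T -> Prop) (Q : Y -> T -> Prop) :
  finite_set P -> (forall U, P U -> exists y, Q y U) ->
  exists ly, forall U, P U -> exists y, In y ly /\ Q y U.
Proof.
  intros [L HL] H.
  destruct (points_list L P Q) as [ly Hly]. { intros; auto. }
  exists ly; intros U PU; apply Hly; auto.
Qed.

Lemma image_infinite {T Y Z} (I : T -> Prop) (m : T -> Y) (Q : Z -> Y -> Prop) :
  infinite_set I -> (forall i, I i -> exists x, Q x (m i)) ->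
  (forall x, finite_set (fun i => I i /\ Q x (m i))) ->
  infinite_set (fun y => exists i, I i /\ y = m i).
Proof.
  intros HI Hex Hfin Hf.
  destruct (finite_points (fun y => exists i, I i /\ y = m i) Q Hf) as [lx Hlx].
  { intros y [i [Ii ->]]; auto. }
  apply HI.
  apply (finite_sub I (fun i => exists x, In x lx /\ (I i /\ Q x (m i)))).
  - intros i Ii. destruct (Hlx (m i)) as [x [Hx Qx]]; eauto.
  - apply finite_union_list; intros; apply Hfin.
Qed.

Lemma cont_const (X : TopSpace) (c : R) : continuous X (fun _ => c).
Proof.
  intros x eps He; exists (fun _ => True); split; [apply open_full|split; auto].
  intros; unfold Rminus; rewrite Rplus_opp_r, Rabs_R0; auto.
Qed.

Lemma cont_lip (X : TopSpace) (f g phi : X -> R) :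
  continuous X f -> continuous X g ->
  (forall x y, Rabs (phi y - phi x) <= Rabs (f y - f x) + Rabs (g y - g x)) ->
  continuous X phi.
Proof.
  intros Hf Hg H x eps He.
  destruct (Hf x (eps/2)) as [U1 [O1 [U1x H1]]]; [lra|].
  destruct (Hg x (eps/2)) as [U2 [O2 [U2x H2]]]; [lra|].
  exists (fun y => U1 y /\ U2 y); split; [apply open_inter; auto|split; auto].
  intros y [Hy1 Hy2]. specialize (H x y). specialize (H1 y Hy1). specialize (H2 y Hy2). lra.
Qed.

Lemma cont_ext (X : TopSpace) (f g : X -> R) :
  (forall x, f x = g x) -> continuous X g -> continuous X f.
Proof.
  intros E Hg x eps He. destruct (Hg x eps He) as [U [O [Ux H]]].
  exists U; repeat split; auto. intros y Uy; rewrite !E; auto.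
Qed.

Lemma cpt_local (phi : R -> R) (a : R) : continuity_pt phi a ->
  forall eps, 0 < eps -> exists d, 0 < d /\ forall t, Rabs (t - a) < d -> Rabs (phi t - phi a) < eps.
Proof.
  intros H eps He. destruct (H eps He) as [d [Hd Hd']].
  exists d; split; auto. intros t Ht.
  destruct (Req_dec t a) as [->|Hne].
  - unfold Rminus; rewrite Rplus_opp_r, Rabs_R0; auto.
  - apply (Hd' t). split; [split; [exact I| auto]|exact Ht].
Qed.

Lemma cont_comp (X : TopSpace) (f : X -> R) (phi : R -> R) :
  continuous X f -> (forall x, continuity_pt phi (f x)) ->
  continuous X (fun y => phi (f y)).
Proof.
  intros Hf Hp x eps He.
  destruct (cpt_local phi (f x) (Hp x) eps He) as [d [Hd Hd']].
  destruct (Hf x d Hd) as [U [O [Ux HU]]].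
  exists U; repeat split; auto.
Qed.

Lemma cpt_id (a : R) : continuity_pt (fun t => t) a.
Proof.
  intros eps He; exists eps; split; auto. intros x [_ H]; exact H.
Qed.

Lemma cont_sq (X : TopSpace) (f : X -> R) : continuous X f -> continuous X (fun y => f y * f y).
Proof.
  intro Hf. apply (cont_comp X f (fun t => t * t)); auto.
  intro x. apply (continuity_pt_mult (fun t => t) (fun t => t)); apply cpt_id.
Qed.

Lemma cont_mult (X : TopSpace) (f g : X -> R) :
  continuous X f -> continuous X g -> continuous X (fun y => f y * g y).
Proof.
  intros Hf Hg.
  assert (Hs : continuous X (fun y => (f y + g y) * (f y + g y))).
  { apply cont_sq. apply (cont_lip X f g); auto. intros x y.
    unfold Rabs; repeat destruct Rcase_abs; lra. }
  assert (Hd : continuous X (fun y => (f y - g y) * (f y - g y))).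
  { apply cont_sq. apply (cont_lip X f g); auto. intros x y.
    unfold Rabs; repeat destruct Rcase_abs; lra. }
  apply (cont_ext X _ (fun y => ((f y + g y) * (f y + g y) - (f y - g y) * (f y - g y)) / 4)).
  { intro; field. }
  apply (cont_lip X _ _ _ Hs Hd). intros x y.
  unfold Rabs; repeat destruct Rcase_abs; lra.
Qed.

Lemma cont_inv (X : TopSpace) (f : X -> R) :
  continuous X f -> (forall x, f x <> 0) -> continuous X (fun y => / f y).
Proof.
  intros Hf Hn. apply (cont_comp X f (fun t => / t)); auto.
  intro x. apply (continuity_pt_inv (fun t => t)); [apply cpt_id|apply Hn].
Qed.

Lemma open_ext (X : TopSpace) (U V : X -> Prop) :
  (forall x, U x <-> V x) -> is_open V -> is_open U.
Proof.
  intros E HV. replace U with V; auto.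
  apply functional_extensionality; intro x; apply propositional_extensionality; split; apply E.
Qed.

Lemma cozero_open (X : TopSpace) (U : X -> Prop) : cozero_set X U -> is_open U.
Proof.
  intros [g [Hg E]].
  apply (open_ext X U (fun x => exists V, (is_open V /\ forall y, V y -> U y) /\ V x)).
  - intro x; split.
    + intro Ux. assert (Hgx : g x <> 0) by (apply E; auto).
      destruct (Hg x (Rabs (g x))) as [V [O [Vx HV]]]. { apply Rabs_pos_lt; auto. }
      exists V; repeat split; auto. intros y Vy; apply E. intro g0.
      specialize (HV y Vy). rewrite g0 in HV.
      replace (0 - g x) with (- g x) in HV by ring. rewrite Rabs_Ropp in HV. lra.
    + intros [V [[_ H] Vx]]; auto.
  - apply open_union. intros V [H _]; auto.
Qed.

Definition zeroC (X : TopSpace) : CX X := exist _ (fun _ => 0) (cont_const X 0).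

Lemma basic_open (X : TopSpace) (f : CX X) (l : list X) (eps : R) :
  cp_open X (basic_nbhd X f l eps).
Proof.
  intros g Hg.
  assert (Hd : exists d, 0 < d /\ forall x, In x l ->
    Rabs (proj1_sig g x - proj1_sig f x) + d < eps).
  { clear -Hg. induction l as [|y l IH].
    - exists 1; split; [lra| intros x []].
    - destruct IH as [d [Hd H]]. { intros x Hx; apply Hg; right; auto. }
      assert (Hy := Hg y (or_introl eq_refl)).
      exists (Rmin d ((eps - Rabs (proj1_sig g y - proj1_sig f y)) / 2)); split.
      + apply Rmin_glb_lt; lra.
      + intros x [<-|Hx].
        * assert (Rmin d ((eps - Rabs (proj1_sig g y - proj1_sig f y)) / 2)
             <= (eps - Rabs (proj1_sig g y - proj1_sig f y)) / 2) by apply Rmin_r. lra.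
        * specialize (H x Hx).
          assert (Rmin d ((eps - Rabs (proj1_sig g y - proj1_sig f y)) / 2) <= d) by apply Rmin_l. lra. }
  destruct Hd as [d [Hd H]]. exists l, d; split; auto.
  intros h Hh x Hx. specialize (H x Hx). specialize (Hh x Hx).
  unfold Rabs in *; repeat destruct Rcase_abs; lra.
Qed.

Lemma sep_fun (X : TopSpace) (Z U : X -> Prop) :
  zero_set X Z -> cozero_set X U -> (forall x, Z x -> U x) ->
  exists h : CX X, (forall x, Z x -> proj1_sig h x = 0) /\ (forall x, ~ U x -> proj1_sig h x = 1).
Proof.
  intros [g1 [Hg1 E1]] [g2 [Hg2 E2]] HZU.
  assert (Hpos : forall x, Rabs (g1 x) + Rabs (g2 x) <> 0).
  { intros x. destruct (Req_dec (g1 x) 0) as [e|n].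
    - assert (g2 x <> 0) by (apply E2, HZU, E1; auto).
      assert (0 < Rabs (g2 x)) by (apply Rabs_pos_lt; auto).
      assert (0 <= Rabs (g1 x)) by apply Rabs_pos. lra.
    - assert (0 < Rabs (g1 x)) by (apply Rabs_pos_lt; auto).
      assert (0 <= Rabs (g2 x)) by apply Rabs_pos. lra. }
  assert (Ha1 : continuous X (fun y => Rabs (g1 y))).
  { apply (cont_lip X g1 g1); auto. intros x y; cbv beta.
    assert (H := Rabs_triang_inv2 (g1 y) (g1 x)). assert (0 <= Rabs (g1 y - g1 x)) by apply Rabs_pos. lra. }
  assert (Ha2 : continuous X (fun y => Rabs (g2 y))).
  { apply (cont_lip X g2 g2); auto. intros x y; cbv beta.
    assert (H := Rabs_triang_inv2 (g2 y) (g2 x)). assert (0 <= Rabs (g2 y - g2 x)) by apply Rabs_pos. lra. }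
  assert (Hs : continuous X (fun y => Rabs (g1 y) + Rabs (g2 y))).
  { apply (cont_lip X _ _ _ Ha1 Ha2). intros x y; cbv beta. replace (Rabs (g1 y) + Rabs (g2 y) - (Rabs (g1 x) + Rabs (g2 x))) with ((Rabs (g1 y) - Rabs (g1 x)) + (Rabs (g2 y) - Rabs (g2 x))) by ring. apply Rabs_triang. }
  assert (Hq : continuous X (fun y => Rabs (g1 y) * / (Rabs (g1 y) + Rabs (g2 y)))).
  { apply cont_mult; auto. apply cont_inv; auto. }
  exists (exist _ _ Hq); simpl; split.
  - intros x Zx. rewrite (proj1 (E1 x) Zx), Rabs_R0. ring.
  - intros x nU. assert (e2 : g2 x = 0) by (apply NNPP; intro n; apply nU, E2; auto).
    rewrite e2, Rabs_R0. rewrite Rplus_0_r. apply Rinv_r.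
    apply Rabs_no_R0. intro e. apply nU, HZU, E1; auto.
Qed.

Lemma dir12 (X : TopSpace) :
  (forall f : Cp X, S_fin (Gamma_pt (Cp X) f) (Omega_pt (Cp X) f)) ->
  S_fin (Gamma_F X) (Omega_cov X).
Proof.
  intros H1 S HS.
  pose (Fn := fun n => proj1_sig (constructive_indefinite_description _ (proj2 (proj2 (HS n))))).
  assert (HF : forall n, (forall U, S n U -> zero_set X (Fn n U) /\ forall x, Fn n U x -> U x) /\
     gamma_cover X (fun V => exists U, S n U /\ V = Fn n U)).
  { intro n. exact (proj2_sig (constructive_indefinite_description _ (proj2 (proj2 (HS n))))). }
  clearbody Fn.
  assert (Hnf : forall n U, S n U -> exists x, ~ U x).
  { intros n U SU. destruct (HS n) as [[[_ Hc] _] _].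
    apply NNPP; intro N. apply Hc. exists U; split; auto.
    intro x; apply NNPP; intro nx; apply N; eauto. }
  assert (Hcz : forall n U, S n U -> cozero_set X U).
  { intros n U SU. destruct (HS n) as [_ [H _]]; auto. }
  pose (Fam := fun n (Z : X -> Prop) => exists U, S n U /\ Z = Fn n U).
  pose (pick := fun n Z => choose_or (fun _ : X => False) (fun U => S n U /\ Z = Fn n U)).
  assert (pick_spec : forall n Z, Fam n Z -> S n (pick n Z) /\ Z = Fn n (pick n Z)).
  { intros n Z HZ. apply choose_or_spec. exact HZ. }
  pose (SEP := fun (Z U : X -> Prop) (h : CX X) =>
     (forall x, Z x -> proj1_sig h x = 0) /\ (forall x, ~ U x -> proj1_sig h x = 1)).
  pose (phi := fun Z U => choose_or (zeroC X) (SEP Z U)).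
  assert (phi_spec : forall n Z, Fam n Z -> SEP Z (pick n Z) (phi Z (pick n Z))).
  { intros n Z HZ. apply choose_or_spec. destruct (pick_spec n Z HZ) as [SU EZ].
    destruct (proj1 (HF n) _ SU) as [Hz Hsub].
    unfold SEP. apply sep_fun.
    - rewrite EZ at 1; exact Hz.
    - eapply Hcz; eauto.
    - intros x Zx; apply Hsub; rewrite <- EZ; exact Zx. }
  pose (A := fun n (h : CX X) => exists Z, Fam n Z /\ h = phi Z (pick n Z)).
  assert (HA : forall n, Gamma_pt (Cp X) (zeroC X) (A n)).
  { intro n. destruct (HF n) as [_ [_ [HFinf HFfin]]]. split; [|split].
    - apply (image_infinite (Fam n) (fun Z => phi Z (pick n Z))
               (fun x (h : CX X) => proj1_sig h x <> 0)); auto.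
      + intros Z HZ. destruct (pick_spec n Z HZ) as [SU _].
        destruct (Hnf n _ SU) as [x nx]. exists x.
        rewrite (proj2 (phi_spec n Z HZ) x nx). lra.
      + intro x. apply (finite_sub _ _ ) with (2 := HFfin x).
        intros Z [HZ Hn]. split; [exact HZ|]. intro Zx. apply Hn.
        apply (proj1 (phi_spec n Z HZ) x Zx).
    - intros [Z [HZ E]]. destruct (pick_spec n Z HZ) as [SU _].
      destruct (Hnf n _ SU) as [x nx].
      assert (H := proj2 (phi_spec n Z HZ) x nx). rewrite <- E in H. simpl in H. lra.
    - intros W HW W0. change (cp_open X W) in HW.
      destruct (HW _ W0) as [l [eps [He Hb]]].
      apply (finite_image _ (fun Z => exists x, In x l /\ (Fam n Z /\ ~ Z x))
               (fun Z => phi Z (pick n Z))).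
      + apply finite_union_list. intros x _. apply HFfin.
      + intros a [[Z [HZ ->]] nW]. exists Z; split; auto.
        apply NNPP; intro N. apply nW, Hb. intros x Hx.
        assert (Zx : Z x) by (apply NNPP; intro nZ; apply N; eauto).
        simpl. rewrite (proj1 (phi_spec n Z HZ) x Zx).
        unfold Rminus; rewrite Rplus_opp_r, Rabs_R0; auto. }
  destruct (H1 (zeroC X) A HA) as [Bs [HBs HOm]].
  pose (zpick := fun n h => choose_or (fun _ : X => True) (fun Z => Fam n Z /\ h = phi Z (pick n Z))).
  pose (r := fun n h => pick n (zpick n h)).
  assert (Key : forall n h, Bs n h -> S n (r n h) /\ forall x, ~ r n h x -> proj1_sig h x = 1).
  { intros n h Bh. assert (Ah := proj2 (HBs n) h Bh).
    assert (Hz : Fam n (zpick n h) /\ h = phi (zpick n h) (pick n (zpick n h))).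
    { apply choose_or_spec. exact Ah. }
    destruct Hz as [HZ E]. split.
    - apply (pick_spec n _ HZ).
    - intros x nx. rewrite E. apply (proj2 (phi_spec n _ HZ)). exact nx. }
  exists (fun n U => exists h, Bs n h /\ U = r n h). split.
  - intro n. split.
    + apply (finite_image _ (Bs n) (r n)); [apply HBs|]. intros a [h [Bh ->]]; eauto.
    + intros U [h [Bh ->]]. apply (Key n h Bh).
  - assert (Hom : forall l : list X, exists U, (exists n, exists h, Bs n h /\ U = r n h) /\
                    forall x, In x l -> U x).
    { intro l. destruct HOm as [Hcl _].
      destruct (Hcl (basic_nbhd X (zeroC X) l 1)) as [a [Wa [n Ba]]].
      - apply basic_open.
      - intros x _; simpl. unfold Rminus; rewrite Rplus_opp_r, Rabs_R0; lra.
      - exists (r n a); split; [eauto|].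
        intros x Hx. apply NNPP; intro N.
        assert (E := proj2 (Key n a Ba) x N). specialize (Wa x Hx).
        simpl in Wa. rewrite E, Rminus_0_r, Rabs_R1 in Wa. lra. }
    split; [split|].
    + split.
      * intro x. destruct (Hom (x :: nil)) as [U [HU Hx]]. exists U; split; auto. apply Hx; left; auto.
      * intros [U [[n [h [Bh ->]]] Hall]]. destruct (Hnf n _ (proj1 (Key n h Bh))) as [x nx]. auto.
    + exact Hom.
    + intros U [n [h [Bh ->]]]. apply cozero_open. apply (Hcz n). apply (Key n h Bh).
Qed.

Lemma lip1 a b c d e : Rabs (Rmax 0 (e - Rabs (a - b)) - Rmax 0 (e - Rabs (c - d))) <= Rabs (a - c) + Rabs (b - d).
Proof. unfold Rmax, Rabs; repeat (destruct Rle_dec || destruct Rcase_abs); lra. Qed.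
Lemma lip2 a b c d e : Rabs (Rmax 0 (Rabs (a - b) - e) - Rmax 0 (Rabs (c - d) - e)) <= Rabs (a - c) + Rabs (b - d).
Proof. unfold Rmax, Rabs; repeat (destruct Rle_dec || destruct Rcase_abs); lra. Qed.
Lemma rmax_ne0 a : Rmax 0 a <> 0 <-> 0 < a.
Proof. unfold Rmax; destruct Rle_dec; split; intros; lra. Qed.
Lemma rmax_eq0 a : Rmax 0 a = 0 <-> a <= 0.
Proof. unfold Rmax; destruct Rle_dec; split; intros; lra. Qed.

Definition ee (n : nat) : R := / (INR n + 1).
Lemma ee_pos n : 0 < ee n.
Proof. unfold ee. apply Rinv_0_lt_compat. assert (H := pos_INR n). lra. Qed.
Lemma ee_mono m n : (m <= n)%nat -> ee n <= ee m.
Proof.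
  intro H. unfold ee. apply Rinv_le_contravar.
  - assert (H' := pos_INR m). lra.
  - apply le_INR in H. lra.
Qed.
Lemma ee_small eps : 0 < eps -> exists N, ee N < eps.
Proof.
  intro He. destruct (INR_archimed eps 1 He) as [n Hn]. exists n. unfold ee.
  assert (H0 := pos_INR n).
  apply (Rmult_lt_reg_l (INR n + 1)); [lra|]. rewrite Rinv_r by lra. nra.
Qed.

Lemma dir21 (X : TopSpace) :
  S_fin (Gamma_F X) (Omega_cov X) ->
  forall f : Cp X, S_fin (Gamma_pt (Cp X) f) (Omega_pt (Cp X) f).
Proof.
  intros H2 f A HA.
  pose (dist := fun (h : CX X) x => Rabs (proj1_sig h x - proj1_sig f x)).
  assert (Bad : forall n x r, 0 < r -> finite_set (fun h => A n h /\ ~ dist h x < r)).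
  { intros n x r Hr. destruct (HA n) as [_ [_ H]].
    assert (Hin : basic_nbhd X f (x :: nil) r f).
    { intros y _. unfold Rminus; rewrite Rplus_opp_r, Rabs_R0; auto. }
    apply (finite_sub _ _) with (2 := H (basic_nbhd X f (x :: nil) r) (basic_open X f _ r) Hin).
    intros h [Ah nd]. split; auto. intro Hb. apply nd, Hb. left; auto. }
  assert (notf : forall n, ~ A n f) by (intro n; apply (HA n)).
  destruct (classic (forall M, exists n, (M <= n)%nat /\ exists h, A n h /\ forall x, dist h x < ee n))
    as [Case1|Case2].
  - pose (D := fun n h => A n h /\ forall x, dist h x < ee n).
    exists (fun n h => h = choose_or f (D n) /\ exists h', D n h'). split.
    + intro n. split.
      * exists (choose_or f (D n) :: nil). intros a [-> _]; left; auto.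
      * intros t [-> Hex]. apply (choose_or_spec f (D n) Hex).
    + split.
      * intros W HW Wf. change (cp_open X W) in HW.
        destruct (HW _ Wf) as [l [eps [He Hb]]].
        destruct (ee_small eps He) as [N HN].
        destruct (Case1 N) as [n [Hn Hex]].
        assert (Dn := choose_or_spec f (D n) Hex).
        exists (choose_or f (D n)). split.
        -- apply Hb. intros x _. assert (H := proj2 Dn x). unfold dist in H.
           assert (H' := ee_mono N n Hn). lra.
        -- exists n; split; auto.
      * intros [n [E Hex]]. apply (notf n). assert (Dn := choose_or_spec f (D n) Hex).
        rewrite <- E in Dn. apply Dn.
  - assert (HM : exists M, forall n, (M <= n)%nat -> forall h, A n h -> exists x, ~ dist h x < ee n).
    { apply NNPP; intro N. apply Case2. intro M. apply NNPP; intro N2. apply N. exists M.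
      intros n Hn h Ah. apply NNPP; intro N3. apply N2. exists n; split; auto. exists h; split; auto.
      intro x. apply NNPP; intro N4. apply N3; eauto. }
    destruct HM as [M HM].
    pose (Uset := fun k h => fun x => dist h x < ee (k + M)%nat).
    pose (Fset := fun k h => fun x => dist h x <= ee (k + M)%nat / 2).
    pose (C := fun k U => exists h, A (k + M)%nat h /\ U = Uset k h).
    pose (hpick := fun k U => choose_or f (fun h => A (k + M)%nat h /\ U = Uset k h)).
    pose (F' := fun k U => Fset k (hpick k U)).
    assert (hpick_spec : forall (k : nat) U, C k U -> A (k + M)%nat (hpick k U) /\ U = Uset k (hpick k U)).
    { intros k U HU. apply choose_or_spec. exact HU. }
    assert (HnX : forall (k : nat) h, A (k + M)%nat h -> exists x, ~ Uset k h x).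
    { intros k h Ah. apply (HM (k + M)%nat); [lia|auto]. }
    assert (Cnf : forall (k : nat) U, C k U -> exists x, ~ U x).
    { intros k U [h [Ah ->]]. auto. }
    assert (Cbad : forall (k : nat) x, finite_set (fun U => C k U /\ ~ U x)).
    { intros k x. apply (finite_image _ _ (Uset k)) with (1 := Bad (k + M)%nat x (ee (k + M)%nat) (ee_pos _)).
      intros U [[h [Ah ->]] nU]. exists h; split; auto. }
    assert (F'bad : forall (k : nat) x, finite_set (fun U => C k U /\ ~ F' k U x)).
    { intros k x. apply (finite_image _ _ (Uset k)) with (1 := Bad (k + M)%nat x (ee (k + M)%nat / 2) ltac:(assert (H := ee_pos (k+M)); lra)).
      intros U [HU nF]. destruct (hpick_spec k U HU) as [Ah E]. exists (hpick k U); split; auto.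
      split; auto. intro Hd. apply nF. unfold F', Fset. lra. }
    assert (Cinf : forall k, infinite_set (C k)).
    { intro k. apply (image_infinite (A (k + M)%nat) (Uset k) (fun x U => ~ U x)).
      - apply (HA (k + M)%nat).
      - intros; auto.
      - intro x. apply (finite_sub _ _) with (2 := Bad (k + M)%nat x (ee (k + M)%nat) (ee_pos _)).
        intros h [Ah nU]; split; auto. }
    assert (F'sub : forall (k : nat) U, C k U -> forall x, F' k U x -> U x).
    { intros k U HU x Hx. destruct (hpick_spec k U HU) as [_ E]. rewrite E.
      unfold F', Fset in Hx. unfold Uset. assert (H := ee_pos (k + M)%nat). lra. }
    pose (FF := fun k V => exists U, C k U /\ V = F' k U).
    assert (FFbad : forall (k : nat) x, finite_set (fun V => FF k V /\ ~ V x)).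
    { intros k x. apply (finite_image _ _ (F' k)) with (1 := F'bad k x).
      intros V [[U [HU ->]] nV]. exists U; auto. }
    assert (FFinf : forall k, infinite_set (FF k)).
    { intro k. apply (image_infinite (C k) (F' k) (fun x V => ~ V x)); auto.
      - intros U HU. destruct (Cnf k U HU) as [x nx]. exists x. intro Fx. apply nx. eapply F'sub; eauto. }
    assert (HC : forall k, Gamma_F X (C k)).
    { intro k. split; [|split].
      - split; [split|split].
        + intro x. destruct (infinite_minus_finite _ _ (Cinf k) (Cbad k x)) as [U [HU nb]].
          exists U; split; auto. apply NNPP; intro nx; apply nb; auto.
        + intros [U [HU Hall]]. destruct (Cnf k U HU) as [x nx]. auto.
        + apply Cinf.
        + apply Cbad.
      - intros U [h [Ah ->]].
        exists (fun x => Rmax 0 (ee (k + M)%nat - Rabs (proj1_sig h x - proj1_sig f x))). split.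
        + apply (cont_lip X (proj1_sig h) (proj1_sig f)); [apply (proj2_sig h)|apply (proj2_sig f)|].
          intros x y; apply lip1.
        + intro x. unfold Uset, dist. rewrite rmax_ne0. lra.
      - exists (F' k). split.
        + intros U HU. split; [|apply F'sub; auto].
          exists (fun x => Rmax 0 (Rabs (proj1_sig (hpick k U) x - proj1_sig f x) - ee (k + M)%nat / 2)). split.
          * apply (cont_lip X (proj1_sig (hpick k U)) (proj1_sig f)); [apply (proj2_sig (hpick k U))|apply (proj2_sig f)|].
            intros x y; apply lip2.
          * intro x. unfold F', Fset, dist. rewrite rmax_eq0. lra.
        + split; [split|split].
          * intro x. destruct (infinite_minus_finite _ _ (FFinf k) (FFbad k x)) as [V [HV nb]].
            exists V; split; auto. apply NNPP; intro nx; apply nb; auto.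
          * intros [V [[U [HU ->]] Hall]]. destruct (Cnf k U HU) as [x nx]. apply nx.
            eapply F'sub; eauto.
          * apply FFinf.
          * apply FFbad. }
    destruct (H2 C HC) as [Vs [HVs HOm]].
    exists (fun n h => (M <= n)%nat /\ exists U, Vs (n - M)%nat U /\ h = hpick (n - M)%nat U).
    assert (BA : forall n h, ((M <= n)%nat /\ exists U, Vs (n - M)%nat U /\ h = hpick (n - M)%nat U) -> A n h).
    { intros n h [Hn [U [HV ->]]]. assert (HU := proj2 (HVs (n - M)%nat) U HV).
      assert (H := proj1 (hpick_spec _ _ HU)). replace (n - M + M)%nat with n in H by lia. exact H. }
    split.
    + intro n. split; [|apply BA].
      apply (finite_image _ (Vs (n - M)%nat) (hpick (n - M)%nat)); [apply HVs|].
      intros a [_ [U [HV ->]]]; eauto.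
    + split.
      * intros W HW Wf. change (cp_open X W) in HW.
        destruct (HW _ Wf) as [l [eps [He Hb]]].
        destruct (ee_small eps He) as [N HN].
        destruct (finite_points (fun U => exists k, In k (seq 0 N) /\ Vs k U) (fun y U => ~ U y)) as [ly Hly].
        { apply finite_union_list. intros k _. apply HVs. }
        { intros U [k [_ HV]]. apply (Cnf k). apply (HVs k); auto. }
        destruct HOm as [[_ Hom] _].
        destruct (Hom (l ++ ly)) as [U [[k HV] Hall]].
        assert (Hk : (N <= k)%nat).
        { destruct (le_lt_dec N k) as [Hk|Hk]; auto. exfalso.
          destruct (Hly U) as [y [Hy ny]].
          { exists k; split; auto. apply in_seq; lia. }
          apply ny, Hall, in_or_app; right; auto. }
        assert (HU := proj2 (HVs k) U HV).
        destruct (hpick_spec k U HU) as [Ah E].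
        exists (hpick k U). split.
        -- apply Hb. intros x Hx. assert (Ux : U x) by (apply Hall, in_or_app; left; auto).
           rewrite E in Ux. unfold Uset, dist in Ux. assert (H := ee_mono N (k + M)%nat ltac:(lia)). lra.
        -- exists (k + M)%nat. split; [lia|]. exists U. replace (k + M - M)%nat with k by lia. auto.
      * intros [n Hn]. apply (notf n), BA, Hn.
Qed.

Theorem mainTheorem7 (X : TopSpace) (HX : tychonoff X) :
  (forall f : Cp X, S_fin (Gamma_pt (Cp X) f) (Omega_pt (Cp X) f)) <->
  S_fin (Gamma_F X) (Omega_cov X).
Proof.
  split; [apply dir12 | apply dir21].
Qed.
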